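(* Let $n\ge 2$. The number of distinct diagonals $(F_{0,0},F_{1,1},\dots,F_{2n-3,2n-3})$ occurring among the $\mathbf{F}$-matrices of fully heterochronous ranked tree shapes with $n$ leaves equals the Catalan number $C_{n-1}=\frac1n\binom{2n-2}{n-1}$.
   Context: A fully heterochronous ranked tree shape with $n$ leaves is a rooted full binary tree (every node has out-degree $0$ or $2$), without leaf labels, with $n$ leaves, together with a total ordering of all $2n-1$ nodes (leaves included) such that nodes appear in increasing order along every path from the root to a leaf; the position of a node in this order, numbered $0,\dots,2n-2$, is its rank. Its $\mathbf{F}$-matrix is the $(2n-2)\times(2n-2)$ lower triangular matrix $F$, indices from $0$ to $2n-3$, where for $0\le j\le i$ the entry $F_{i,j}$ is the number of edges from a parent node $v$ to a child node $w$ with rank of $v$ at most $j$ and rank of $w$ larger than $i$. *)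

(* Defs.v *)
From mathcomp Require Import all_boot.
Set Implicit Arguments. Unset Strict Implicit. Unset Printing Implicit Defensive.

(* A fully heterochronous ranked tree shape with n leaves is encoded by
   identifying each of its 2n-1 nodes with its rank (an element of
   'I_(2n-1)).  The tree is given by its parent map [p]: the parent of the
   node of rank w (w > 0) is the node of rank [p w]; the value [p 0] (root)
   is irrelevant.  Since ranks increase along root-to-leaf paths, the root
   has rank 0 and every non-root node has a parent of smaller rank. *)

Notation node n := 'I_(n.*2.-1).

Definition nchildren n (p : {ffun node n -> node n}) (v : node n) : nat :=
  #|[set w : node n | (0 < w) && (p w == v)]|.

Definition ranked_tree n (p : {ffun node n -> node n}) : bool :=
  [&& [forall w : node n, (0 < w) ==> (p w < w)],
      [forall v : node n, (nchildren p v == 0) || (nchildren p v == 2)]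
    & #|[set v : node n | nchildren p v == 0]| == n].

Definition Fentry n (p : {ffun node n -> node n}) (i j : nat) : nat :=
  #|[set w : node n | [&& 0 < w, p w <= j & i < w]]|.

Definition Fdiag n (p : {ffun node n -> node n}) : seq nat :=
  [seq Fentry p i i | i <- iota 0 (n.*2 - 2)].

Definition diagonals n : seq (seq nat) :=
  undup [seq Fdiag p | p <- enum {ffun node n -> node n} & ranked_tree p].

Definition catalan (m : nat) : nat := 'C(m.*2, m) %/ m.+1.

(* Main.v *)
Require Import Defs.
From mathcomp Require Import all_boot zify.
Set Implicit Arguments. Unset Strict Implicit.


Fixpoint okp (h : nat) (s : seq nat) : bool :=
  match s with
  | [::] => h == 1
  | x :: s' => [&& 0 < x, (x == h.+1) || (x.+1 == h) & okp x s']
  end.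

Fixpoint paths (k h : nat) : seq (seq nat) :=
  match k with
  | 0 => if h == 1 then [:: [::]] else [::]
  | k'.+1 => map (cons h.+1) (paths k' h.+1) ++
             (if 1 < h then map (cons h.-1) (paths k' h.-1) else [::])
  end.

Lemma mem_paths k h s : (s \in paths k h) = (size s == k) && okp h s.
Proof.
elim: k h s => [|k IH] h s /=.
  case: s => [|x s] /=; case: (h == 1) => //.
case: s => [|x s] /=.
  rewrite mem_cat; apply/negbTE; apply/norP; split.
    by apply/mapP => -[].
  by case: ifP => // _; apply/mapP => -[].
rewrite mem_cat eqSS.
apply/idP/idP.
  case/orP.
    case/mapP => t; rewrite IH => /andP[St Ot] [-> ->]; rewrite St /= Ot eqxx; by [].
  case: ifP => // h1; case/mapP => t; rewrite IH => /andP[St Ot] [-> ->].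
  rewrite St /= Ot. have -> : (h.-1).+1 == h by apply/eqP; lia.
  rewrite orbT /=; apply/andP; split => //; lia.
case/and3P => Sz Px /andP[/orP[/eqP-> | /eqP E] O].
  apply/orP; left; apply/mapP; exists s => //; by rewrite IH Sz.
apply/orP; right; have h1 : 1 < h by lia.
rewrite h1; apply/mapP; exists s; first by rewrite IH Sz -E.
by rewrite -E.
Qed.

Lemma uniq_paths k h : uniq (paths k h).
Proof.
elim: k h => [|k IH] h /=; first by case: (h == 1).
rewrite cat_uniq map_inj_uniq ?IH //; last by move=> a b [].
case: ifP => h1; last by rewrite /= ?andbT ?has_nil.
rewrite map_inj_uniq ?IH ?andbT //; last by move=> a b [].
apply/hasPn => t /mapP [u _ ->]; apply/mapP => -[v _ [E _]]; lia.
Qed.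

Definition g k h := size (paths k h.+1).

Lemma g_rec k h : g k.+1 h = g k h.+1 + (if 0 < h then g k h.-1 else 0).
Proof.
rewrite /g /= size_cat size_map; case: h => [|h] //=; by rewrite size_map.
Qed.

Lemma g_closed k : forall h d,
  (k + h = d.*2 -> g k h + 'C(k, d.+1) = 'C(k, d)) /\
  (k + h = d.*2.+1 -> g k h = 0).
Proof.
elim: k => [|k IH] h d.
  rewrite /g /=; split => E.
    case: d E => [|d] E; last by rewrite bin0n addn0; case: h E => //= h; lia.
    by have -> : h = 0 by lia.
  by case: h E => [|h] /=; [lia|].
rewrite g_rec; split => E.
  have [IH1 _] := IH h.+1 d; have {}IH1 := IH1 ltac:(lia).
  case: h E IH1 => [|h] E IH1 /=.
    case: d E IH1 => [|d] E IH1; first lia.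
    have Hs : 'C(k, d) = 'C(k, d.+1).
      rewrite -(@bin_sub k d.+1); last lia.
      congr 'C(_, _); lia.
    rewrite !binS; lia.
  case: d E IH1 => [|d] E IH1; first lia.
  have [IH2 _] := IH h d; have {}IH2 := IH2 ltac:(lia).
  rewrite !binS; lia.
have [_ IH1] := IH h.+1 d; rewrite IH1; last lia.
case: h E IH1 => [|h] E IH1 //=.
have [_ IH2] := IH h d.-1; rewrite IH2 //; lia.
Qed.

Lemma size_paths_cat m : size (paths m.*2 1) = 'C(m.*2, m) %/ m.+1.
Proof.
have [H _] := g_closed m.*2 0 m; have {}H := H ltac:(lia).
rewrite -/(g _ _).
have H2 := mul_bin_left m.*2 m.
have E2 : m.*2 - m = m by lia.
rewrite E2 in H2.
have E : 'C(m.*2, m) = m.+1 * g m.*2 0 by nia.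
by rewrite E mulKn.
Qed.


Lemma card_count N (P : pred nat) : #|[set w : 'I_N | P w]| = count P (iota 0 N).
Proof. rewrite cardsE cardE -val_enum_ord count_map /enum_mem size_filter count_filter.
by apply: eq_count => x; rewrite /= andbT. Qed.

Section Tree.
Variable n : nat.
Variable p : {ffun node n -> node n}.
Hypothesis Hp : forall w : node n, 0 < w -> p w < w.

Lemma F0 (v : node n) : val v = 0 -> Fentry p 0 0 = nchildren p v.
Proof.
move=> v0; rewrite /Fentry /nchildren; apply: eq_card => w; rewrite !inE.
rewrite -val_eqE /= v0. have := @Hp w. lia.
Qed.

Lemma Fstep (v : node n) : 0 < v -> Fentry p v v + 1 = Fentry p v.-1 v.-1 + nchildren p v.
Proof.
move=> v0; rewrite /Fentry /nchildren.
set A := [set w | _]; set B := [set w | _]; set C := [set w | _].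
have E : B :|: C = v |: A.
  apply/setP => w; rewrite !inE -!val_eqE /=.
  have := @Hp w; lia.
have dis : B :&: C = set0.
  apply/setP => w; rewrite !inE -!val_eqE /=.
  have := @Hp w; lia.
have vA : v \notin A by rewrite !inE; lia.
have -> : #|B| + #|C| = #|B :|: C| by rewrite -cardsUI dis cards0 addn0.
by rewrite E cardsU1 vA addnC.
Qed.

Lemma Fpos (i : nat) : i.+1 < n.*2.-1 -> 0 < Fentry p i i.
Proof.
move=> Hi.
suff [w Hw] : exists w : node n, [&& 0 < w, p w <= i & i < w].
  by rewrite /Fentry; apply/card_gt0P; exists w; rewrite inE.
have : forall k (w : node n), w < k -> i < w -> exists w : node n, [&& 0 < w, p w <= i & i < w].
  elim => [|k IH] w //= wk iw.
  case: (leqP (p w) i) => pw.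
    exists w; rewrite pw iw andbT /=; lia.
  apply: (IH (p w)) => //; have := @Hp w; lia.
move/(_ n.*2.-1 (Ordinal Hi)); apply => //=.
Qed.

Lemma Flast (i : nat) : i.+2 = n.*2.-1 -> Fentry p i i = 1.
Proof.
move=> Hi.
have Hm : i.+1 < n.*2.-1 by lia.
transitivity #|[set Ordinal Hm]|; last exact: cards1.
rewrite /Fentry; apply: eq_card => w; rewrite !inE -val_eqE /=.
have := @Hp w; have := ltn_ord w; lia.
Qed.

Lemma sum_nchildren : \sum_(v : node n) nchildren p v = n.*2.-1.-1.
Proof.
rewrite /nchildren.
transitivity (\sum_(v : node n) \sum_(w : node n | (0 < w) && (p w == v)) 1).
  by apply: eq_bigr => v _; rewrite sum1dep_card.
rewrite -(partition_big (fun w => p w) predT) // sum1dep_card card_count.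
case: (n.*2.-1) => [|N] //=.
rewrite add0n -{2}(size_iota 1 N) -count_predT.
by apply: eq_in_count => x; rewrite mem_iota => /andP[] ->.
Qed.
End Tree.


Lemma okpP h s : okp h s =
  all (fun i => (0 < nth 0 s i) && ((nth 0 s i == (nth 0 (h::s) i).+1) || ((nth 0 s i).+1 == nth 0 (h::s) i))) (iota 0 (size s))
  && (last h s == 1).
Proof.
elim: s h => [|x s IH] h //=.
rewrite IH -(addn0 1) iotaDl all_map /=.
rewrite -!andbA; congr (_ && (_ && _)).
Qed.

Definition Fd n (p : {ffun node n -> node n}) i := Fentry p i i.

Lemma nth_Fdiag n (p : {ffun node n -> node n}) i : i < n.*2 - 2 -> nth 0 (Fdiag p) i = Fentry p i i.
Proof. by move=> Hi; rewrite /Fdiag (nth_map 0) ?size_iota // nth_iota. Qed.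

Lemma tree_hp n (p : {ffun node n -> node n}) : ranked_tree p -> forall w : node n, 0 < w -> p w < w.
Proof. by case/and3P => /forallP H _ _ w; move/implyP: (H w). Qed.

Lemma diag_ok n (p : {ffun node n -> node n}) : 2 <= n -> ranked_tree p -> okp 1 (Fdiag p).
Proof.
move=> n2 rt; have Hp := tree_hp rt.
case/and3P: rt => _ /forallP H2 _.
have N3 : 2 < n.*2.-1 by lia.
rewrite okpP /Fdiag size_map size_iota -/(Fdiag p); apply/andP; split.
  apply/allP => i; rewrite mem_iota => /andP[_ Hi]; rewrite add0n in Hi.
  rewrite nth_Fdiag // Fpos //=; last by lia.
  case: i Hi => [|i] Hi /=.
    have H0 : 0 < n.*2.-1 by lia.
    rewrite (@F0 n p Hp (Ordinal H0)) //.
    have : nchildren p (Ordinal H0) != 0.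
      rewrite /nchildren -lt0n; apply/card_gt0P.
      have H1 : 1 < n.*2.-1 by lia.
      exists (Ordinal H1); rewrite inE /=; have := @Hp (Ordinal H1) isT.
      by rewrite -val_eqE /=; lia.
    move: (H2 (Ordinal H0)); lia.
  rewrite nth_Fdiag; last lia.
  have Hv : i.+1 < n.*2.-1 by lia.
  have := @Fstep n p Hp (Ordinal Hv) isT; move: (H2 (Ordinal Hv)) => /=; lia.
have Hs : 0 < size (Fdiag p) by rewrite size_map size_iota; lia.
rewrite -nth_last (set_nth_default 0) ?size_map ?size_iota; last lia.
rewrite nth_Fdiag; last lia.
rewrite (@Flast n p Hp) //; lia.
Qed.


Section Stack.
Variable e : nat -> nat.
Definition intl k := e k.+1 == (e k).+1.
Fixpoint stk k := if k is k'.+1 then (if intl k' then k' :: k' :: behead (stk k') else behead (stk k')) else [:: 0].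
Definition par k := head 0 (stk k).
Variable N : nat.
Hypothesis He0 : e 0 = 1.
Hypothesis HeN : e N = 0.
Hypothesis Hstep : forall k, k < N -> intl k || ((e k.+1).+1 == e k).
Hypothesis Hpos : forall k, k < N -> 0 < e k.

Lemma stk_size k : k <= N -> size (stk k) = e k.
Proof.
elim: k => [|k IH] kN /=; first by rewrite He0.
have {}IH := IH (ltnW kN).
have := Hstep kN; have := Hpos kN.
case: (stk k) IH => [|t r] /= IH; first lia.
rewrite /intl; case: ifP => /= H; lia.
Qed.

Lemma stk_lt k : 0 < k -> k <= N -> all (fun x => x < k) (stk k).
Proof.
elim: k => [|k IH] // _ kN /=.
case: k IH kN => [|k] IH kN.
  by rewrite /=; case: ifP.
have {}IH := IH isT (ltnW kN).
have Hr : all (fun x => x < k.+2) (behead (stk k.+1)).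
  case: (stk k.+1) IH => [|t r] //= /andP[_ H].
  by apply: sub_all H => x /=; lia.
case: ifP => _ //=; rewrite Hr !andbT; lia.
Qed.

Lemma par_lt k : 0 < k -> k < N -> par k < k.
Proof.
move=> k0 kN; have := stk_lt k0 (ltnW kN); have := stk_size (ltnW kN).
have := Hpos kN; rewrite /par; case: (stk k) => [|t r] /=; first lia.
by move=> _ _ /andP[].
Qed.

Lemma stk_count k : k <= N -> forall j, count_mem j (stk k) + count (fun w => par w == j) (iota 0 k)
   = 2 * ((j < k) && intl j) + (j == 0).
Proof.
elim: k => [|k IH] kN j; first by rewrite /=; lia.
have {}IH := IH (ltnW kN) j.
have := stk_size (ltnW kN); have := Hpos kN.
have -> : iota 0 k.+1 = iota 0 k ++ [:: k] by rewrite -addn1 iotaD.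
rewrite count_cat /=.
have Pk : par k = head 0 (stk k) by [].
case: (stk k) IH Pk => [|t r] /= IH Pk; first lia.
move=> _ _; rewrite Pk.
case: (eqVneq j k) IH => [->|jk] IH.
  case: ifP => H /=; rewrite ?H ?eqxx ?ltnSn /=; lia.
have E : (j < k.+1) = (j < k) by lia.
rewrite E; case: ifP => H /=; lia.
Qed.

Lemma par_count j : count (fun w => par w == j) (iota 0 N) = 2 * ((j < N) && intl j) + (j == 0).
Proof.
have := stk_count (leqnn N) j; have := stk_size (leqnn N); rewrite HeN.
by case: (stk N).
Qed.
End Stack.


Lemma leaves_count n (p : {ffun node n -> node n}) : 1 <= n ->
  (forall w : node n, 0 < w -> p w < w) ->
  (forall v, (nchildren p v == 0) || (nchildren p v == 2)) ->
  #|[set v | nchildren p v == 0]| = n.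
Proof.
move=> n1 Hp H2.
have S := @sum_nchildren n p.
rewrite (bigID (fun v => nchildren p v == 0)) /= in S.
rewrite big1 in S; last by move=> v /eqP.
rewrite (eq_bigr (fun _ => 2)) in S; last by move=> v Hv; have := H2 v; lia.
rewrite sum_nat_cond_const in S.
have C := cardsC [set v : node n | nchildren p v == 0].
have E : ~: [set v : node n | nchildren p v == 0] = [set v | nchildren p v != 0].
  by apply/setP => v; rewrite !inE.
rewrite E card_ord in C; have S2 : #|[set v : node n | nchildren p v != 0]| * 2 = n.*2.-2 by rewrite -S add0n.
move: C S2; set a := #|[set v | nchildren p v == 0]|; set b := #|[set v | nchildren p v != 0]|. lia.
Qed.

Lemma diag_real n s : 2 <= n -> size s = n.*2 - 2 -> okp 1 s ->
  exists p : {ffun node n -> node n}, ranked_tree p && (Fdiag p == s).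
Proof.
move=> n2 Hs; rewrite okpP => /andP[/allP A /eqP L].
pose N := n.*2.-1.
pose e := fun k => nth 0 (1 :: s) k.
have He0 : e 0 = 1 by [].
have HeN : e N = 0 by rewrite /e nth_default //= Hs /N; lia.
have Hpos : forall k, k < N -> 0 < e k.
  case => [|k] // Hk; have := A k; rewrite mem_iota => /(_ ltac:(lia)) /andP[] //.
have Hstep : forall k, k < N -> intl e k || ((e k.+1).+1 == e k).
  move=> k Hk; case: (ltnP k (size s)) => ks.
    have /andP[_ H] := A k ltac:(rewrite mem_iota; lia).
    by rewrite /intl /e /=.
  have Ek : k = size s by rewrite /N in Hk; lia.
  have El : e k = 1.
    by rewrite /e Ek -[size s]/((size (1::s)).-1) nth_last /= L.
  have EN : k.+1 = N by rewrite /N; lia.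
  by rewrite EN HeN El orbT.
pose p := [ffun w : node n => insubd w (par e (val w))].
have parN : forall w : node n, par e w < N.
  move=> w; case: (posnP w) => [->|w0] //=; first by rewrite /par /N /=; lia.
  have := par_lt He0 HeN Hstep Hpos w0 (ltn_ord w); have := ltn_ord w; rewrite /N; lia.
have pv : forall w : node n, val (p w) = par e w.
  by move=> w; rewrite ffunE val_insubd parN.
have Hp : forall w : node n, 0 < w -> p w < w.
  by move=> w w0; rewrite pv; apply: (par_lt He0 HeN Hstep Hpos w0 (ltn_ord w)).
have nch : forall v : node n, nchildren p v = 2 * intl e v.
  move=> v; rewrite /nchildren.
  transitivity #|[set w : node n | (0 < val w) && (par e w == v)]|.
    by apply: eq_card => w; rewrite !inE -val_eqE pv.
  rewrite (card_count _ (fun x => (0 < x) && (par e x == v))).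
  have := par_count He0 HeN Hstep Hpos v.
  have HN : N = N.-1.+1 by rewrite /N; lia.
  have -> : iota 0 N = 0 :: iota 1 N.-1 by rewrite {1}HN.
  rewrite /= ltn_ord.
  have -> : count (fun w => (0 < w) && (par e w == v)) (iota 1 N.-1) = count (fun w => par e w == v) (iota 1 N.-1).
    by apply: eq_in_count => x; rewrite mem_iota => /andP[-> _].
  have -> : par e 0 = 0 by [].
  lia.
have FE : forall i, i < N.-1 -> Fentry p i i = e i.+1.
  elim => [|i IH] Hi.
    have H0 : 0 < N by rewrite /N; lia.
    rewrite (@F0 n p Hp (Ordinal H0)) // nch /=.
    have := Hstep 0 H0; have := Hpos 1 ltac:(rewrite /N; lia); rewrite /intl He0; lia.
  have Hv : i.+1 < N by lia.
  have := @Fstep n p Hp (Ordinal Hv) isT; rewrite nch /= IH; last lia.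
  have := Hstep i.+1 Hv; rewrite /intl; lia.
exists p; apply/andP; split.
  apply/and3P; split.
  - by apply/forallP => w; apply/implyP; exact: Hp.
  - by apply/forallP => v; rewrite nch; case: (intl e v).
  - apply/eqP; apply: leaves_count => //; first lia.
    by move=> v; rewrite nch; case: (intl e v).
apply/eqP; apply: (eq_from_nth (x0 := 0)); first by rewrite size_map size_iota Hs.
move=> i; rewrite size_map size_iota => Hi.
rewrite nth_Fdiag // FE //; rewrite /N; lia.
Qed.

Theorem proposition3 (n : nat) : 2 <= n -> size (diagonals n) = catalan n.-1.
Proof.
move=> n2.
have mem : diagonals n =i paths (n.*2 - 2) 1.
  move=> s; rewrite mem_paths mem_undup; apply/mapP/idP.
    case=> p; rewrite mem_filter => /andP[rt _] ->.
    by rewrite size_map size_iota eqxx /=; exact: diag_ok.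
  case/andP => /eqP Hs ok; have [p /andP[rt /eqP E]] := diag_real n2 Hs ok.
  by exists p => //; rewrite mem_filter rt mem_enum.
rewrite (perm_size (uniq_perm (undup_uniq _) (uniq_paths _ _) mem)).
have -> : n.*2 - 2 = (n.-1).*2 by lia.
by rewrite size_paths_cat /catalan.
Qed.
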